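(* Let $n\in\mathbb N_0$ and $j\in\{-n,\dots,n\}$. If $n+j$ is odd, then $\widetilde P_n^j(0)=0$. Otherwise, \[ \frac{2n+1}{2\pi^2\sqrt{(n+1)^2-j^2}} \le \left|\widetilde P_n^j(0)\right|^2 \le \frac{2n+1}{4\pi\sqrt{(n+1)^2-j^2}}. \] Furthermore, for every $j\in\mathbb N_0$, $\lim_{n\to\infty,\ n+j\text{ even}} \left|\widetilde P_n^j(0)\right| = \frac1\pi$.
   Context: Associated Legendre functions: $P_n^k(t)=\frac{(-1)^k}{2^n n!}(1-t^2)^{k/2}\frac{d^{n+k}}{dt^{n+k}}(t^2-1)^n$ for $n\in\mathbb N_0$, $k=0,\dots,n$, $t\in[-1,1]$. Normalized versions: $\widetilde P_n^k=\sqrt{\frac{2n+1}{4\pi}\frac{(n-k)!}{(n+k)!}}\,P_n^k$ for $k=0,\dots,n$, and $\widetilde P_n^{-k}=(-1)^k\widetilde P_n^k$. *)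

(* Defs.v *)
From HB Require Import structures.
From mathcomp Require Import all_boot all_order all_algebra.
From mathcomp Require Import all_classical all_reals all_analysis.
Set Implicit Arguments. Unset Strict Implicit. Unset Printing Implicit Defensive.
Import Order.TTheory GRing.Theory Num.Theory.
Local Open Scope ring_scope.

Definition legendreP (R : realType) (n k : nat) (t : R) : R :=
  (-1) ^+ k / (2 ^+ n * (n`!)%:R) * (Num.sqrt (1 - t ^+ 2)) ^+ k
  * ((('X ^+ 2 - 1) ^+ n : {poly R}) ^`(n + k)).[t].

Definition legendrePn (R : realType) (n k : nat) (t : R) : R :=
  Num.sqrt ((2 * n%:R + 1) / (4 * pi) * ((n - k)`!)%:R / ((n + k)`!)%:R)
  * legendreP n k t.

Definition legendrePt (R : realType) (n : nat) (j : int) (t : R) : R :=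
  if (0 <= j)%R then legendrePn n `|j|%N t
  else (-1) ^+ `|j|%N * legendrePn n `|j|%N t.

(* Main.v *)
Require Import Defs.
From HB Require Import structures.
From mathcomp Require Import all_boot all_order all_algebra.
From mathcomp Require Import all_classical all_reals all_analysis.
From mathcomp Require Import ring lra zify.
Import Order.TTheory GRing.Theory Num.Theory.
Import numFieldNormedType.Exports.
Local Open Scope ring_scope.
Section S.
Variable R : realType.
Fixpoint F (k : nat) (x : R) : R :=
  match k with
  | 0 => x
  | 1 => 1 - cos x
  | (k'.+1 as k1).+1 => - (sin x ^+ k1 * cos x) / k1.+1%:R + k1%:R / k1.+1%:R * F k' x
  end.

Lemma F_der k x : is_derive x (1:R) (F k) (sin x ^+ k).
Proof.
elim/ltn_ind: k x => -[|[|k]] IH x.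
- by rewrite expr0; apply: is_derive_id.
- apply: trigger_derive; rewrite /=; lra.
- have IHk := IH k (ltnW (ltnSn k.+1)) x.
  have -> : F k.+2 = (- (k.+2%:R)^-1) *: (((@sin R) ^+ k.+1) * cos) + (k.+1%:R / k.+2%:R) *: F k.
  by apply/funext => y; rewrite !fctE /GRing.scale /=; ring.
  apply: is_derive_eq.
  rewrite !fctE /GRing.scale /=.
  have -> : cos x * (k.+1%:R * sin x ^+ k * cos x) = k.+1%:R * sin x ^+ k * cos x ^+ 2 by ring.
  rewrite cos2sin2 !exprS; field; have := ler0n R k; lra.
Qed.


Lemma F0 k : F k 0 = 0.
Proof.
elim/ltn_ind: k => -[|[|k]] IH /=; first by [].
  by rewrite cos0 subrr.
by rewrite sin0 IH // expr0n /= mul0r oppr0 mul0r add0r mulr0.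
Qed.

Lemma Fpi k : F k.+2 (pi/2) = k.+1%:R / k.+2%:R * F k (pi/2).
Proof. by rewrite /= cos_pihalf mulr0 oppr0 mul0r add0r. Qed.

Fixpoint cc (m : nat) : R :=
  match m with 0 => 1 | m'.+1 => cc m' * (m'.*2.+1)%:R / (m'.*2.+2)%:R end.

Lemma cc_gt0 m : 0 < cc m.
Proof. elim: m => //= m IH; rewrite divr_gt0 // mulr_gt0 // ltr0n. Qed.

Lemma Feven m : F m.*2 (pi/2) = cc m * (pi/2).
Proof.
elim: m => [|m IH]; first by rewrite /= mul1r.
rewrite doubleS Fpi IH /=; ring.
Qed.

Lemma Fodd m : F m.*2.+1 (pi/2) = (m.*2.+1%:R * cc m)^-1.
Proof.
elim: m => [|m IH]; first by rewrite /= cos_pihalf subr0 mulr1 invr1.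
rewrite doubleS Fpi IH /=.
have h1 := cc_gt0 m.
have h2 : (0:R) < m.*2.+1%:R by rewrite ltr0n.
have h3 : (0:R) < m.*2.+2%:R by rewrite ltr0n.
have h4 : (0:R) < m.*2.+3%:R by rewrite ltr0n.
field; repeat split; lra.
Qed.

Lemma F_mono k : F k.+1 (pi/2) <= F k (pi/2).
Proof.
rewrite -subr_ge0.
have -> : F k (pi / 2) - F k.+1 (pi / 2) = (F k - F k.+1) (pi/2) - (F k - F k.+1) 0.
  by rewrite !fctE !F0 subrr subr0.
rewrite subr_ge0.
have D x : is_derive x (1:R) (F k - F k.+1) (sin x ^+ k - sin x ^+ k.+1).
  have := F_der k x; have := F_der k.+1 x => ? ?. exact: is_deriveB.
apply: (@ger0_derive1_ndecr _ _ 0 (pi/2)).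
- by move=> x _; have [] := D x.
- move=> x; rewrite in_itv /= => /andP[x0 x1].
  have Dx := D x; rewrite derive1E derive_val.
  have s0 : 0 <= sin x by apply: sin_ge0_pi; apply/andP; split; lra. 
  have s1 := sin_le1 x.
  rewrite exprS -{1}(mul1r (sin x ^+ k)) -mulrBl mulr_ge0 // ?subr_ge0 ?exprn_ge0 //.
- apply: derivable_within_continuous => x _; by have [] := D x.
- by [].
- have := pi_gt0 R; lra.
- by [].
Qed.

Lemma cc_lb m : 2 / (pi * m.*2.+1%:R) <= cc m ^+ 2.
Proof.
have := F_mono m.*2; rewrite Fodd Feven.
have h1 := cc_gt0 m.
have h2 : (0:R) < m.*2.+1%:R by rewrite ltr0n.
have hp := pi_gt0 R.
move=> H.
rewrite ler_pdivrMr; last by rewrite mulr_gt0.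
rewrite -(ler_pM2l (mulr_gt0 h2 h1)) mulfV in H; last by rewrite gt_eqF // mulr_gt0.
nra.
Qed.

Lemma cc_ub m : (0 < m)%N -> cc m ^+ 2 <= (pi * m%:R)^-1.
Proof.
case: m => // m _.
have := F_mono m.*2.+1; rewrite -doubleS Fodd Feven /=.
have h1 := cc_gt0 m.
have h2 : (0:R) < m.*2.+1%:R by rewrite ltr0n.
have h3 : (0:R) < m.*2.+2%:R by rewrite ltr0n.
have hp := pi_gt0 R.
have -> : m.*2.+2%:R = 2 * m.+1%:R :> R by rewrite -natrM mul2n.
have h4 : (0:R) < m.+1%:R by rewrite ltr0n.
move=> H.
rewrite -(ler_pM2l (mulr_gt0 h2 h1)) mulfV in H; last by rewrite gt_eqF // mulr_gt0.
rewrite -[X in _ <= X]mul1r ler_pdivlMr; last by rewrite mulr_gt0.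
apply: le_trans H; rewrite le_eqVlt; apply/orP; left; apply/eqP.
field; lra.
Qed.

Lemma cc_ub2 m : cc m ^+ 2 <= (m.*2.+1%:R)^-1.
Proof.
elim: m => [|m IH] /=; first by rewrite expr1n invr1.
have h1 := cc_gt0 m.
have h2 : (0:R) < m.*2.+1%:R by rewrite ltr0n.
rewrite -(ler_pM2l h2) mulfV in IH; last by rewrite gt_eqF.
rewrite doubleS -[X in _ <= X]mul1r ler_pdivlMr; last by rewrite ltr0n.
rewrite -[m.*2.+3]addn3 -[m.*2.+2]addn2 -[m.*2.+1]addn1 !natrD in IH *.
have h0 : (0:R) <= m.*2%:R by [].
set x := m.*2%:R in h0 IH *.
have x2 : 0 < x + 2 by lra.
have -> : (cc m * (x + 1) / (x + 2)) ^+ 2 * (x + 3) =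
  ((x + 1) * cc m ^+ 2) * ((x + 1) * (x + 3) / (x + 2) ^+ 2).
  by field; lra.
apply: mulr_ile1 => //.
- by rewrite mulr_ge0 // ?exprn_ge0 // ltW // ltr_wpDl.
- by rewrite divr_ge0 // ?exprn_ge0 ?mulr_ge0 //; lra.
- rewrite ler_pdivrMr ?exprn_gt0 //; nra.
Qed.

Lemma expand n : (('X ^+ 2 - 1) ^+ n : {poly R}) =
  \sum_(i < n.+1) ((-1) ^+ (n - i) *+ 'C(n, i))%:P * 'X^(i.*2).
Proof.
rewrite addrC exprDn; apply: eq_bigr => i _.
by rewrite polyCMn rmorphXn rmorphN1 -mulrnAl -exprM mul2n.
Qed.

Lemma coefP n N : (('X ^+ 2 - 1) ^+ n : {poly R})`_N =
  \sum_(i < n.+1) ((-1) ^+ (n - i) *+ 'C(n, i)) * (N == i.*2)%:R.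
Proof.
rewrite expand coef_sum; apply: eq_bigr => i _; by rewrite coefCM coefXn.
Qed.

Lemma coef_odd n N : odd N -> (('X ^+ 2 - 1) ^+ n : {poly R})`_N = 0.
Proof.
move=> oN; rewrite coefP big1 // => i _.
case: eqP => [E|]; last by rewrite mulr0.
by move: oN; rewrite E odd_double.
Qed.

Lemma coef_even n M : (M <= n)%N -> (('X ^+ 2 - 1) ^+ n : {poly R})`_(M.*2) =
  (-1) ^+ (n - M) *+ 'C(n, M).
Proof.
move=> Mn; rewrite coefP (bigD1 (Ordinal (n:=n.+1) (m:=M) Mn)) //= eqxx mulr1.
rewrite big1 ?addr0 // => i /negPf iM.
case: eqP => [E|]; last by rewrite mulr0.
move/eqP: iM; case; apply/val_inj => /=.
by apply/eqP; rewrite -(inj_eq double_inj) E.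
Qed.

Lemma derivn0 (p : {poly R}) N : (p^`(N)).[0] = p`_N * N`!%:R.
Proof. by rewrite horner_coef0 coef_derivn addn0 ffactnn mulr_natr. Qed.

Lemma cc_fact m : cc m = (m.*2)`!%:R / (2 ^+ (m.*2) * (m`!)%:R ^+ 2).
Proof.
elim: m => [|m IH] /=; first by rewrite expr0 mul1r expr1n divr1.
rewrite IH doubleS !factS !natrM !exprS.
have h1 : (0:R) < (m`!)%:R by rewrite ltr0n fact_gt0.
have h2 : (0:R) < m.*2.+1%:R by rewrite ltr0n.
have h3 : (0:R) < m.*2.+2%:R by rewrite ltr0n.
have h4 : (0:R) < m.+1%:R by rewrite ltr0n.
have h5 : (0:R) < 2 ^+ m.*2 by rewrite exprn_gt0.
have -> : m.*2.+2%:R = 2 * m.+1%:R :> R by rewrite -natrM mul2n.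
field; lra.
Qed.

Lemma legP0 n k : legendreP n k (0:R) =
  (-1) ^+ k / (2 ^+ n * (n`!)%:R) * ((('X ^+ 2 - 1) ^+ n : {poly R})`_(n + k) * (n + k)`!%:R).
Proof. by rewrite /legendreP derivn0 expr0n /= subr0 sqrtr1 expr1n mulr1. Qed.

Lemma Pn_odd n k : odd (n + k) -> legendrePn n k (0:R) = 0.
Proof. by move=> o; rewrite /legendrePn legP0 coef_odd // !(mul0r, mulr0). Qed.

Lemma Pn_even n k M : (k <= n)%N -> (n + k = M.*2)%N ->
  legendrePn n k (0:R) ^+ 2 = (2 * n%:R + 1) / (4 * pi) * cc M * cc (n - M).
Proof.
move=> kn E.
have Mn : (M <= n)%N by rewrite -leq_double -E -addnn leq_add2l.
have EL : (n - k = (n - M).*2)%N by rewrite doubleB -E -addnn subnDl.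
have EN : n = (M + (n - M))%N by rewrite subnKC.
rewrite /legendrePn legP0 E coef_even // EL.
rewrite exprMn sqr_sqrtr; last first.
  have := pi_gt0 R => hp.
  by rewrite !mulr_ge0 // ?invr_ge0 // ?mulr_ge0 // ltW.
rewrite !cc_fact.
have F1 := bin_fact Mn.
set L := (n - M)%N in EL EN F1 *.
rewrite -F1 !natrM !exprMn !sqrr_sign.
have e3 : ((-1) ^+ L *+ 'C(n, M)) ^+ 2 = ('C(n,M)%:R)^+2 :> R.
  by rewrite -mulr_natr exprMn sqrr_sign mul1r.
rewrite e3 exprVn !exprMn.
have e2 : (2:R) ^+ n ^+ 2 = 2 ^+ M.*2 * 2 ^+ L.*2.
  by rewrite -exprD -exprM EN -!mul2n -mulnDr mulnC.
have hp := pi_gt0 R.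
have h1 : (0:R) < (M`!)%:R by rewrite ltr0n fact_gt0.
have h1' : (0:R) < (L`!)%:R by rewrite ltr0n fact_gt0.
have h2 : (0:R) < (M.*2)`!%:R by rewrite ltr0n fact_gt0.
have h2' : (0:R) < (L.*2)`!%:R by rewrite ltr0n fact_gt0.
have h3 : (0:R) < 'C(n, M)%:R by rewrite ltr0n bin_gt0.
have h5 : (0:R) < 2 ^+ M.*2 by rewrite exprn_gt0.
have h5' : (0:R) < 2 ^+ L.*2 by rewrite exprn_gt0.
rewrite e2; move: hp; generalize (@pi R) => P hp.
field; rewrite !gt_eqF //.
Qed.

Lemma le_sq (a b : R) : 0 <= a -> 0 <= b -> a^+2 <= b^+2 -> a <= b.
Proof. move=> *; nra. Qed.

Lemma Pt_sq n (j : int) : `|legendrePt n j (0:R)| ^+ 2 = legendrePn n `|j|%N (0:R) ^+ 2.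
Proof.
rewrite real_normK ?num_real // /legendrePt.
by case: ifP => _ //; rewrite exprMn sqrr_sign mul1r.
Qed.

Lemma bounds n k M (Q : R) : (k <= n)%N -> (n + k = M.*2)%N ->
  Q = n.+1%:R ^+ 2 - k%:R ^+ 2 ->
  ((2 * n%:R + 1) / (2 * pi ^+ 2 * Num.sqrt Q) <= legendrePn n k (0:R) ^+ 2) /\
  (legendrePn n k (0:R) ^+ 2 <= (2 * n%:R + 1) / (4 * pi * Num.sqrt Q)).
Proof.
move=> kn E hQ.
rewrite (Pn_even n k M kn E).
have Mn : (M <= n)%N by rewrite -leq_double -E -addnn leq_add2l.
have EN : n = (M + (n - M))%N by rewrite subnKC.
move: (n - M)%N EN => L EN.
have EK : M = (L + k)%N by lia.
have EQ : Q = (M.*2.+1)%:R * (L.*2.+1)%:R.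
  rewrite hQ; apply/eqP; rewrite subr_eq -!natrX -natrM -natrD; apply/eqP; congr (_%:R).
  rewrite EN EK; nia.
have u0 : (0:R) < (M.*2.+1)%:R by rewrite ltr0n.
have v0 : (0:R) < (L.*2.+1)%:R by rewrite ltr0n.
have Q0 : 0 < Q by rewrite EQ mulr_gt0.
have s0 : 0 < Num.sqrt Q by rewrite sqrtr_gt0.
have sQ : Num.sqrt Q ^+ 2 = Q by rewrite sqr_sqrtr // ltW.
have hp := pi_gt0 R.
have cM := cc_gt0 M; have cL := cc_gt0 L.
have K0 : 0 <= (2 * n%:R + 1) / (4 * pi) :> R.
  by rewrite divr_ge0 // ?mulr_ge0 // ltW.
split.
- have T : 2 / (pi * Num.sqrt Q) <= cc M * cc L.
    apply: le_sq; first by rewrite divr_ge0 // ltW // mulr_gt0.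
      by rewrite mulr_ge0 // ltW.
    rewrite expr_div_n exprMn sQ EQ [X in _ <= X]exprMn.
    apply: le_trans (ler_pM _ _ (cc_lb M) (cc_lb L)); last first.
    + by rewrite divr_ge0 // ltW // mulr_gt0.
    + by rewrite divr_ge0 // ltW // mulr_gt0.
    rewrite le_eqVlt; apply/orP; left; apply/eqP.
    move: hp; generalize (@pi R) => P hp; field.
    by rewrite !gt_eqF.
  have -> : (2 * n%:R + 1) / (2 * pi ^+ 2 * Num.sqrt Q) =
     (2 * n%:R + 1) / (4 * pi) * (2 / (pi * Num.sqrt Q)).
    move: hp s0; generalize (@pi R) (Num.sqrt Q) => P S hp s0.
    field; by rewrite !gt_eqF.
  by rewrite -[X in _ <= X]mulrA; apply: ler_wpM2l.
- have T : cc M * cc L <= (Num.sqrt Q)^-1.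
    apply: le_sq; first by rewrite mulr_ge0 // ltW.
      by rewrite invr_ge0 ltW.
    rewrite exprVn sQ EQ exprMn invfM.
    apply: ler_pM; try exact: cc_ub2; by rewrite ?exprn_ge0 // ltW.
  have -> : (2 * n%:R + 1) / (4 * pi * Num.sqrt Q) =
     (2 * n%:R + 1) / (4 * pi) * (Num.sqrt Q)^-1.
    move: hp s0; generalize (@pi R) (Num.sqrt Q) => P S hp s0.
    field; by rewrite !gt_eqF.
  by rewrite -[X in X <= _]mulrA; apply: ler_wpM2l.
Qed.

End S.
Section T.
Variable R : realType.

Lemma z4 (z : R) : 0 <= z -> `|z - 1| <= `|z ^+ 4 - 1|.
Proof.
move=> z0.
have E : z ^+ 4 - 1 = (z - 1) * ((z + 1) * (z ^+ 2 + 1)) by ring.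
rewrite E normrM -[X in X <= _]mulr1 ler_wpM2l //.
rewrite ger0_norm; last by rewrite mulr_ge0 // ?addr_ge0 // exprn_ge0.
have : 0 <= z ^+ 2 by rewrite exprn_ge0.
nra.
Qed.

Lemma Y_bounds (a b n j M L eps : R) : 0 <= a -> 0 <= b -> 0 < eps ->
  2 <= a * (2 * M + 1) -> 2 <= b * (2 * L + 1) -> a * M <= 1 -> b * L <= 1 ->
  2 * M = n + j -> 2 * L = n - j -> 0 <= j -> 4 * j ^+ 2 + 1 <= n -> 2 * j <= n ->
  2 < eps * n ->
  `|(2 * n + 1) ^+ 2 * (a * b) / 16 - 1| < eps.
Proof.
move=> a0 b0 e0 h1 h2 h3 h4 eM eL j0 n1 n2 ne.
have n0 : 1 <= n by nra.
have M0 : 0 <= M by nra.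
have L0 : 0 <= L by nra.
set Y := (2 * n + 1) ^+ 2 * (a * b) / 16.
have HY : 16 * Y = (2 * n + 1) ^+ 2 * (a * b) by rewrite /Y; field.
have P1 : 4 <= a * b * ((2 * M + 1) * (2 * L + 1)).
  have H1 : 0 <= a * (2 * M + 1) - 2 by lra.
  have H2 : 0 <= b * (2 * L + 1) - 2 by lra.
  have := mulr_ge0 H1 H2; nra.
have P2 : a * b * (M * L) <= 1.
  have H1 : 0 <= 1 - a * M by lra.
  have H2 : 0 <= b * L by rewrite mulr_ge0.
  have := mulr_ge0 H1 H2; nra.
have ab0 : 0 <= a * b by rewrite mulr_ge0.
have Q1 : (2 * M + 1) * (2 * L + 1) <= (n + 1) ^+ 2 by nra.
have P3 : 4 <= a * b * (n + 1) ^+ 2.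
  have := ler_wpM2l ab0 Q1; lra.
have sq0 : 0 <= (2 * n + 1) ^+ 2 by apply: sqr_ge0.
have Lo : (1 - Y) * (n + 1) <= 1.
  have E : 16 * Y * (n + 1) ^+ 2 = (2 * n + 1) ^+ 2 * (a * b * (n + 1) ^+ 2).
    by rewrite HY; ring.
  have := ler_wpM2l sq0 P3; rewrite -E => W.
  nra.
have Up : 4 * Y * (n ^+ 2 - j ^+ 2) <= (2 * n + 1) ^+ 2.
  have E4 : 4 * (M * L) = n ^+ 2 - j ^+ 2 by nra.
  have E : 16 * Y * (M * L) = (2 * n + 1) ^+ 2 * (a * b * (M * L)).
    by rewrite HY; ring.
  have := ler_wpM2l sq0 P2; rewrite -E mulr1 => W.
  rewrite -E4; lra.
rewrite ltr_norml; apply/andP; split.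
- have : 0 < n + 1 by lra.
  nra.
- have D3 : 3 * n ^+ 2 <= 4 * (n ^+ 2 - j ^+ 2) by nra.
  rewrite ltNge; apply/negP => H.
  have H1 : 0 <= (Y - 1 - eps) * (4 * (n ^+ 2 - j ^+ 2)).
    by rewrite mulr_ge0 //; nra.
  have H2 : 0 <= (eps * n - 2) * n by rewrite mulr_ge0 //; nra.
  nra.
Qed.
End T.
Lemma lb_a (R : realType) m : 2 <= pi * cc R m ^+ 2 * (2 * m%:R + 1).
Proof.
have H := cc_lb R m.
have hp := pi_gt0 R.
rewrite ler_pdivrMr in H; last by rewrite mulr_gt0 // ltr0n.
have Eu : m.*2.+1%:R = 2 * m%:R + 1 :> R by rewrite -addn1 natrD -mul2n natrM.
apply: le_trans H _; rewrite Eu le_eqVlt; apply/orP; left; apply/eqP; ring.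
Qed.

Lemma ub_a (R : realType) m : (0 < m)%N -> pi * cc R m ^+ 2 * m%:R <= 1.
Proof.
move=> m0; have H := cc_ub R m m0.
have hp := pi_gt0 R.
rewrite -[X in _ <= X]mul1r ler_pdivlMr in H; last by rewrite mulr_gt0 // ltr0n.
apply: le_trans H; rewrite le_eqVlt; apply/orP; left; apply/eqP; ring.
Qed.

Lemma parity (n : nat) (j : int) : (`|j| <= n)%N ->
  (2 %| n%:Z + j)%Z = ~~ odd (n + `|j|%N).
Proof.
case: j => [k|k] /= hj.
  by rewrite -PoszD dvdzE /= dvdn2.
by rewrite NegzE subzn // dvdzE /= dvdn2 oddB // oddD.
Qed.

Lemma intsq (R : realType) (j : int) : (j%:~R : R) ^+ 2 = (`|j|%N)%:R ^+ 2.
Proof.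
case: j => [k|k] /=; first by rewrite -pmulrn.
by rewrite NegzE mulrNz sqrrN -pmulrn.
Qed.

Theorem lemma1 (R : realType) :
  (forall (n : nat) (j : int), (`|j| <= n)%N ->
     (~~ (2 %| n%:Z + j)%Z -> legendrePt n j (0 : R) = 0) /\
     ((2 %| n%:Z + j)%Z ->
        (2 * n%:R + 1) / (2 * pi ^+ 2 * Num.sqrt (n.+1%:R ^+ 2 - j%:~R ^+ 2))
          <= `|legendrePt n j (0 : R)| ^+ 2 /\
        `|legendrePt n j (0 : R)| ^+ 2
          <= (2 * n%:R + 1) / (4 * pi * Num.sqrt (n.+1%:R ^+ 2 - j%:~R ^+ 2))))
  /\
  (forall j : nat, forall eps : R, 0 < eps ->
     exists N : nat, forall n : nat, (N <= n)%N -> ~~ odd (n + j) ->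
       `| `|legendrePt n j%:Z (0 : R)| - pi^-1 | < eps).
Proof.
split.
  move=> n j hj; rewrite parity // negbK; split.
    move=> o; rewrite /legendrePt (Pn_odd R n `|j|%N o).
    by case: ifP => _; rewrite ?mulr0.
  move=> ev; rewrite Pt_sq intsq.
  have E : (n + `|j| = ((n + `|j|)./2).*2)%N.
    by rewrite -[LHS]odd_double_half (negPf ev) add0n.
  exact: (bounds R n `|j|%N _ _ hj E).
move=> j eps e0.
have [K HK] : exists K : nat, 2 / eps < K%:R.
  by exists (Num.Def.archi_bound (2 / eps)); apply: archi_boundP; rewrite divr_ge0 // ltW.
exists (4 * j ^ 2 + 2 * j + 2 + K)%N => n Nn ev.
have E : (n + j = ((n + j)./2).*2)%N.
  by rewrite -[LHS]odd_double_half (negPf ev) add0n.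
move: ((n + j)./2) E => M E.
have jn : (j <= n)%N by lia.
have Mn : (M <= n)%N by lia.
have EN : n = (M + (n - M))%N by rewrite subnKC.
have hP := Pn_even R n j M jn E.
move: (n - M)%N EN hP => L EN hP.
have EK : M = (L + j)%N by lia.
have L0 : (0 < L)%N by lia.
have M0 : (0 < M)%N by lia.
have hp := pi_gt0 R.
set x := `|legendrePt n j%:Z (0 : R)|.
have x0 : 0 <= x by rewrite /x normr_ge0.
have hx2 : x ^+ 2 = (2 * n%:R + 1) / (4 * pi) * cc R M * cc R L.
  by rewrite /x Pt_sq /= hP.
have S1 : `|x - pi^-1| <= `|(pi * x) ^+ 4 - 1|.
  apply: (le_trans _ (z4 R _ (mulr_ge0 (ltW hp) x0))).
  have -> : x - pi^-1 = (pi * x - 1) * pi^-1.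
    move: hp; generalize (@pi R) => P hp; field; rewrite gt_eqF //.
  rewrite normrM -[X in _ <= X]mulr1 ler_wpM2l // ger0_norm ?invr_ge0 ?ltW //.
  rewrite invf_lt1 //; have := pi_ge2 R; lra.
have S2 : (pi * x) ^+ 4 = (2 * n%:R + 1) ^+ 2 * ((pi * cc R M ^+ 2) * (pi * cc R L ^+ 2)) / 16.
  have -> : (pi * x) ^+ 4 = pi ^+ 4 * (x ^+ 2) ^+ 2 by rewrite -exprM; ring.
  rewrite hx2; move: hp; generalize (@pi R) => P hp; field; rewrite gt_eqF //.
apply: le_lt_trans S1 _; rewrite S2.
have eM : 2 * M%:R = n%:R + j%:R :> R.
  by rewrite -natrM -natrD; congr (_%:R); lia.
have eL : 2 * L%:R = n%:R - j%:R :> R.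
  have : n%:R = 2 * L%:R + j%:R :> R by rewrite -natrM -natrD; congr (_%:R); lia.
  lra.
have n1 : 4 * j%:R ^+ 2 + 1 <= n%:R :> R.
  have : (4 * j ^ 2 + 1 <= n)%N by lia.
  by rewrite -(ler_nat R) natrD natrM natrX.
have n2 : 2 * j%:R <= n%:R :> R.
  have : (2 * j <= n)%N by lia.
  by rewrite -(ler_nat R) natrM.
have ne : 2 < eps * n%:R.
  have : K%:R <= n%:R :> R by rewrite ler_nat; lia.
  rewrite ltr_pdivrMr // in HK; nra.
apply: (@Y_bounds R _ _ _ _ _ _ _ _ _ e0 (lb_a R M) (lb_a R L) (ub_a R M M0) (ub_a R L L0) eM eL (ler0n _ _) n1 n2 ne).
- apply: mulr_ge0; [exact: ltW | exact: sqr_ge0].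
- apply: mulr_ge0; [exact: ltW | exact: sqr_ge0].
Qed.
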